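(* Let $G$ be a finite group, $\pi:G\to\mathcal U(H_\pi)$ and $\rho:G\to\mathcal U(H_\rho)$ irreducible unitary representations, and $\psi\in H_\pi\otimes H_\rho$ a marginally cyclic unit vector such that $$\mathrm{span}\{(\pi(s)\otimes\rho(t))\psi\psi^*(\pi(s)\otimes\rho(t))^*:s,t\in G\}=\mathcal B(H_\pi\otimes H_\rho).$$ Let $u(s,t)=\langle(\pi(s)\otimes\rho(t))\psi,\psi\rangle$, $\tilde E_{s,s',g,g'}=\delta_{s,g}\delta_{s',g'}\pi(s^{-1}s')$ and $\tilde F_{t,t',h,h'}=\delta_{t,h}\delta_{t',h'}\rho(t^{-1}t')$. Then the model $(H_\pi\otimes H_\rho,\tilde E,\tilde F,\psi)$ is a self-test for the class $\mathfrak M(u)$: for every full rank unitary model $(H_A\otimes H_B,E,F,\xi)$ whose QNS correlation equals $\Theta(u)$, there exist Hilbert spaces $H_A^{\rm aux},H_B^{\rm aux}$, isometries $T_A:H_A\to H_\pi\otimes H_A^{\rm aux}$, $T_B:H_B\to H_\rho\otimes H_B^{\rm aux}$ and a unit vector $\xi^{\rm aux}\in H_A^{\rm aux}\otimes H_B^{\rm aux}$ such that $$(T_A\otimes T_B)(E_{s,s',g,g'}\otimes F_{t,t',h,h'})\xi=\big((\tilde E_{s,s',g,g'}\otimes\tilde F_{t,t',h,h'})\psi\big)\otimes\xi^{\rm aux}$$ for all $s,s',g,g',t,t',h,h'\in G$ (with the obvious reshuffling of tensor factors).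
   Context: Vectors $\psi\in H\otimes K$ (finite dimensional) are marginally cyclic if $(\mathcal B(H)\otimes1)\psi=H\otimes K=(1\otimes\mathcal B(K))\psi$ (equivalently, $\psi$ has full Schmidt rank). For a finite set $G$, $e_{s,s'}$ are the matrix units of $\mathcal B(\ell^2(G))$, and the Schur multiplier channel $\Theta(u)$ on $\mathcal B(\ell^2(G))\otimes\mathcal B(\ell^2(G))$ is given by $\Theta(u)(e_{s,s'}\otimes e_{t,t'})=u(s^{-1}s',t^{-1}t')e_{s,s'}\otimes e_{t,t'}$. A unistochastic operator matrix (USOM) over $G$ on a Hilbert space $H$ is a block operator matrix $(E_{s,s',g,g'})_{s,s',g,g'\in G}$ with $E_{s,s',g,g'}=U_{g,s}^*U_{g',s'}$ for some block unitary $U=(U_{g,s})$ on $H^G=\oplus_{g\in G}H$. A unitary model is $(H_A\otimes H_B,E,F,\xi)$ with $H_A,H_B$ finite dimensional, $E$ a USOM on $H_A$, $F$ a USOM on $H_B$, $\xi$ a unit vector; it is full rank if the reduced density operators $(\mathrm{id}\otimes\mathrm{Tr})(\xi\xi^* )$ and $(\mathrm{Tr}\otimes\mathrm{id})(\xi\xi^* )$ are invertible. Its QNS correlation is the map $\Gamma$ with $\Gamma(e_{s,s'}\otimes e_{t,t'})=\sum_{g,g',h,h'}\langle(E_{s,s',g,g'}\otimes F_{t,t',h,h'})\xi,\xi\rangle e_{g,g'}\otimes e_{h,h'}$. *)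

(* Defs.v *)
(* Finite-dimensional Hilbert spaces are C^d, represented by
   column vectors 'cV[C]_d; operators are matrices; the tensor product of
   C^n and C^m is C^(n*m) via the Kronecker product [tensmx] (notation *t)
   of mathcomp-real-closed. *)
From HB Require Import structures.
From mathcomp Require Import all_boot all_order all_algebra all_fingroup.
From mathcomp Require Import mxrepresentation.
From mathcomp Require Import reals.
From mathcomp.real_closed Require Export complex mxtens.

Set Implicit Arguments.
Unset Strict Implicit.
Unset Printing Implicit Defensive.

Import GRing.Theory Num.Theory.
Local Open Scope ring_scope.

Section Defs.
Variable C : numClosedFieldType.

Definition hadj {p q} (A : 'M[C]_(p, q)) : 'M[C]_(q, p) := (map_mx Num.conj A)^T.

(* inner product <v, w> = w^* v (linear in the first argument) *)
Definition inner {p} (v w : 'cV[C]_p) : C := (hadj w *m v) 0 0.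

Definition unit_vec {p} (v : 'cV[C]_p) : Prop := inner v v = 1.

Definition isometry_mx {p q} (T : 'M[C]_(p, q)) : Prop := hadj T *m T = 1%:M.

Definition unitary_mx {p} (U : 'M[C]_p) : Prop :=
  hadj U *m U = 1%:M /\ U *m hadj U = 1%:M.

Definition unitary_rep {gT : finGroupType} {n}
  (r : mx_representation C [set: gT] n) : Prop :=
  forall s : gT, unitary_mx (r s).

Definition marginally_cyclic {n m} (psi : 'cV[C]_(n * m)) : Prop :=
  (forall v : 'cV[C]_(n * m), exists A : 'M[C]_n, v = (A *t (1%:M : 'M[C]_m)) *m psi)
  /\ (forall v : 'cV[C]_(n * m), exists B : 'M[C]_m, v = ((1%:M : 'M[C]_n) *t B) *m psi).

(* Block unitary U = (U_{g,s}) on H^G = (+)_{g in G} H, H = C^d. *)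
Definition block_unitary {gT : finGroupType} {d} (U : gT -> gT -> 'M[C]_d) : Prop :=
  (forall s s' : gT, \sum_(g : gT) hadj (U g s) *m U g s' = (s == s')%:R *: 1%:M)
  /\ (forall g g' : gT, \sum_(s : gT) U g s *m hadj (U g' s) = (g == g')%:R *: 1%:M).

Definition USOM {gT : finGroupType} {d} (E : gT -> gT -> gT -> gT -> 'M[C]_d) : Prop :=
  exists U : gT -> gT -> 'M[C]_d, block_unitary U /\
    forall s s' g g', E s s' g g' = hadj (U g s) *m U g' s'.

Definition red_density_A {dA dB} (xi : 'cV[C]_(dA * dB)) : 'M[C]_dA :=
  \matrix_(i, i') \sum_(j < dB)
     xi (mxtens_index (i, j)) 0 * (xi (mxtens_index (i', j)) 0)^*.
Definition red_density_B {dA dB} (xi : 'cV[C]_(dA * dB)) : 'M[C]_dB :=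
  \matrix_(j, j') \sum_(i < dA)
     xi (mxtens_index (i, j)) 0 * (xi (mxtens_index (i, j')) 0)^*.

(* A linear map Phi on B(l^2(G)) (x) B(l^2(G)) is encoded by its coefficients in
   the matrix-unit basis:  Phi s s' t t' g g' h h' is the coefficient of
   e_{g,g'} (x) e_{h,h'} in Phi(e_{s,s'} (x) e_{t,t'}). *)
Definition qns_map (gT : finGroupType) :=
  gT -> gT -> gT -> gT -> gT -> gT -> gT -> gT -> C.

Definition schur_channel {gT : finGroupType} (u : gT -> gT -> C) : qns_map gT :=
  fun s s' t t' g g' h h' =>
    if [&& g == s, g' == s', h == t & h' == t'] then u (s^-1 * s')%g (t^-1 * t')%g
    else 0.

Definition unitary_model {gT : finGroupType} {dA dB}
  (E : gT -> gT -> gT -> gT -> 'M[C]_dA) (F : gT -> gT -> gT -> gT -> 'M[C]_dB)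
  (xi : 'cV[C]_(dA * dB)) : Prop :=
  USOM E /\ USOM F /\ unit_vec xi.

Definition full_rank {dA dB} (xi : 'cV[C]_(dA * dB)) : Prop :=
  red_density_A xi \in unitmx /\ red_density_B xi \in unitmx.

Definition qns_correlation {gT : finGroupType} {dA dB}
  (E : gT -> gT -> gT -> gT -> 'M[C]_dA) (F : gT -> gT -> gT -> gT -> 'M[C]_dB)
  (xi : 'cV[C]_(dA * dB)) : qns_map gT :=
  fun s s' t t' g g' h h' => inner ((E s s' g g' *t F t t' h h') *m xi) xi.

(* Reshuffling (H_pi (x) H_rho) (x) (H_A^aux (x) H_B^aux)
   -> (H_pi (x) H_A^aux) (x) (H_rho (x) H_B^aux). *)
Definition reshuffle {n m a b k} (M : 'M[C]_((n * m) * (a * b), k))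
  : 'M[C]_((n * a) * (m * b), k) :=
  \matrix_(i, j)
    M (mxtens_index
         (mxtens_index ((mxtens_unindex (mxtens_unindex i).1).1,
                        (mxtens_unindex (mxtens_unindex i).2).1),
          mxtens_index ((mxtens_unindex (mxtens_unindex i).1).2,
                        (mxtens_unindex (mxtens_unindex i).2).2))) j.

End Defs.

(* Main.v *)
Require Import Defs.
From HB Require Import structures.
From mathcomp Require Import all_boot all_order all_algebra all_fingroup.
From mathcomp Require Import mxrepresentation.
From mathcomp Require Import reals.
From mathcomp.real_closed Require Import complex mxtens.

Set Implicit Arguments.
Unset Strict Implicit.
Unset Printing Implicit Defensive.
Import GRing.Theory Num.Theory.
Local Open Scope ring_scope.

Section Gen.
Variable C : numClosedFieldType.
Implicit Types (p q r : nat).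

Lemma hadjM p q r (A : 'M[C]_(p, q)) (B : 'M[C]_(q, r)) :
  hadj (A *m B) = hadj B *m hadj A.
Proof. by rewrite /hadj map_mxM trmx_mul. Qed.

Lemma hadjK p q (A : 'M[C]_(p, q)) : hadj (hadj A) = A.
Proof. by apply/matrixP=> i j; rewrite !mxE conjCK. Qed.

Lemma hadjD p q (A B : 'M[C]_(p, q)) : hadj (A + B) = hadj A + hadj B.
Proof. by apply/matrixP=> i j; rewrite !mxE rmorphD. Qed.

Lemma hadjN p q (A : 'M[C]_(p, q)) : hadj (- A) = - hadj A.
Proof. by apply/matrixP=> i j; rewrite !mxE rmorphN. Qed.

Lemma hadjZ p q c (A : 'M[C]_(p, q)) : hadj (c *: A) = c^* *: hadj A.
Proof. by apply/matrixP=> i j; rewrite !mxE rmorphM. Qed.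

Lemma hadj0 p q : hadj (0 : 'M[C]_(p, q)) = 0.
Proof. by apply/matrixP=> i j; rewrite !mxE rmorph0. Qed.

Lemma hadj1 p : hadj (1%:M : 'M[C]_p) = 1%:M.
Proof. by apply/matrixP=> i j; rewrite !mxE eq_sym; case: eqP; rewrite ?rmorph1 ?rmorph0. Qed.

Lemma hadj_sum p q (I : finType) (F : I -> 'M[C]_(p, q)) :
  hadj (\sum_i F i) = \sum_i hadj (F i).
Proof. exact: (big_morph _ (@hadjD p q) (@hadj0 p q)). Qed.

Lemma hadj_tens p q p' q' (A : 'M[C]_(p, q)) (B : 'M[C]_(p', q')) :
  hadj (A *t B) = hadj A *t hadj B.
Proof. by rewrite /hadj map_mxT trmx_tens. Qed.

Lemma tensmxDl p q p' q' (A A' : 'M[C]_(p, q)) (B : 'M[C]_(p', q')) :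
  (A + A') *t B = A *t B + A' *t B.
Proof. by apply/matrixP=> i j; rewrite !mxE mulrDl. Qed.
Lemma tensmxDr p q p' q' (A : 'M[C]_(p, q)) (B B' : 'M[C]_(p', q')) :
  A *t (B + B') = A *t B + A *t B'.
Proof. by apply/matrixP=> i j; rewrite !mxE mulrDr. Qed.
Lemma tensmxZl p q p' q' c (A : 'M[C]_(p, q)) (B : 'M[C]_(p', q')) :
  (c *: A) *t B = c *: (A *t B).
Proof. by apply/matrixP=> i j; rewrite !mxE mulrA. Qed.
Lemma tensmxZr p q p' q' c (A : 'M[C]_(p, q)) (B : 'M[C]_(p', q')) :
  A *t (c *: B) = c *: (A *t B).
Proof. by apply/matrixP=> i j; rewrite !mxE mulrCA. Qed.
Lemma tensmxNl p q p' q' (A : 'M[C]_(p, q)) (B : 'M[C]_(p', q')) :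
  (- A) *t B = - (A *t B).
Proof. by apply/matrixP=> i j; rewrite !mxE mulNr. Qed.
Lemma tensmx_suml p q p' q' (I : finType) (F : I -> 'M[C]_(p, q)) (B : 'M[C]_(p', q')) :
  (\sum_i F i) *t B = \sum_i (F i *t B).
Proof.
exact: (big_morph (fun A => A *t B) (fun A A' => tensmxDl A A' B) (tens0mx _)).
Qed.
Lemma tensmx_sumr p q p' q' (I : finType) (A : 'M[C]_(p, q)) (F : I -> 'M[C]_(p', q')) :
  A *t (\sum_i F i) = \sum_i (A *t F i).
Proof.
exact: (big_morph (fun B => A *t B) (fun B B' => tensmxDr A B B') (tensmx0 _)).
Qed.

Lemma hadj_mul_eq0 p q (M : 'M[C]_(p, q)) : hadj M *m M = 0 -> M = 0.
Proof.
move=> H; apply/matrixP=> i j; rewrite mxE.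
have /matrixP/(_ j j) := H; rewrite !mxE => S.
have S' : \sum_k (M k j)^* * M k j = 0.
  by rewrite -[RHS]S; apply: eq_bigr => k _; rewrite !mxE.
have P0 : forall k, true -> 0 <= (M k j)^* * M k j.
  by move=> k _; rewrite mulrC mul_conjC_ge0.
have /eqP := psumr_eq0P P0 S' (i:=i) isT.
by rewrite mulrC mul_conjC_eq0 => /eqP.
Qed.

Lemma mx11P (A B : 'M[C]_1) : A 0 0 = B 0 0 -> A = B.
Proof. by move=> H; rewrite [A]mx11_scalar [B]mx11_scalar H. Qed.

Lemma colext p q (M M' : 'M[C]_(p, q)) :
  (forall v : 'cV[C]_q, M *m v = M' *m v) -> M = M'.
Proof.
move=> H; apply/matrixP=> i j.
by have /matrixP/(_ i 0) := H (delta_mx j 0); rewrite -!colE !mxE.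
Qed.

Lemma sum_tens p q (F : 'I_(p * q) -> C) :
  \sum_(k < p * q) F k = \sum_(a < p) \sum_(b < q) F (mxtens_index (a, b)).
Proof.
rewrite pair_big /=; apply: reindex.
by exists (@mxtens_unindex p q) => k _; [rewrite mxtens_indexK | rewrite mxtens_unindexK]; case: k.
Qed.

Lemma sum_tens4 p q p' q' (F : 'I_((p * q) * (p' * q')) -> C) :
  \sum_(k < (p * q) * (p' * q')) F k =
  \sum_(a < p) \sum_(b < q) \sum_(c < p') \sum_(d < q')
     F (mxtens_index (mxtens_index (a, b), mxtens_index (c, d))).
Proof.
rewrite sum_tens (sum_tens (fun A => \sum_(B < p' * q') F (mxtens_index (A, B)))).
by apply: eq_bigr => a _; apply: eq_bigr => b _; rewrite sum_tens.
Qed.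

Definition matv p q (v : 'cV[C]_(p * q)) : 'M[C]_(p, q) :=
  \matrix_(i, j) v (mxtens_index (i, j)) 0.

Lemma matv_tens p q p' q' (M : 'M[C]_(p', p)) (N : 'M[C]_(q', q)) (v : 'cV[C]_(p * q)) :
  matv ((M *t N) *m v) = M *m matv v *m N^T.
Proof.
apply/matrixP=> i j; rewrite !mxE sum_tens.
under eq_bigr do under eq_bigr do rewrite tensmxE.
rewrite exchange_big /=; apply: eq_bigr => b _.
rewrite !mxE mulr_suml; apply: eq_bigr => a _.
by rewrite !mxE mulrAC.
Qed.

Lemma matv_inj p q (v w : 'cV[C]_(p * q)) : matv v = matv w -> v = w.
Proof.
move=> /matrixP H; apply/matrixP=> k c; rewrite [c]ord1.
case: (mxtens_indexP k) => a b; have := H a b; rewrite !mxE //.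
Qed.

Lemma redA p q (xi : 'cV[C]_(p * q)) :
  red_density_A xi = matv xi *m hadj (matv xi).
Proof. by apply/matrixP=> i i'; rewrite !mxE; apply: eq_bigr => j _; rewrite !mxE. Qed.

Lemma redB p q (xi : 'cV[C]_(p * q)) :
  red_density_B xi = (matv xi)^T *m hadj ((matv xi)^T).
Proof. by apply/matrixP=> i i'; rewrite !mxE; apply: eq_bigr => j _; rewrite !mxE. Qed.

Lemma cancelA p q p' (xi : 'cV[C]_(p * q)) (M M' : 'M[C]_(p', p)) :
  red_density_A xi \in unitmx ->
  (M *t (1%:M : 'M_q)) *m xi = (M' *t 1%:M) *m xi -> M = M'.
Proof.
move=> U /(congr1 (@matv _ _)); rewrite !matv_tens trmx1 !mulmx1 => H.
rewrite -[M]mulmx1 -[M']mulmx1 -(mulmxV U) redA !mulmxA H //.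
Qed.

Lemma cancelB p q q' (xi : 'cV[C]_(p * q)) (N N' : 'M[C]_(q', q)) :
  red_density_B xi \in unitmx ->
  ((1%:M : 'M_p) *t N) *m xi = (1%:M *t N') *m xi -> N = N'.
Proof.
move=> U /(congr1 (@matv _ _)); rewrite !matv_tens !mul1mx => /(congr1 trmx).
rewrite !trmx_mul !trmxK => H.
rewrite -[N]mulmx1 -[N']mulmx1 -(mulmxV U) redB !mulmxA H //.
Qed.

Lemma sum_delta p (k0 : 'I_p) (F : 'I_p -> C) :
  \sum_k (k == k0)%:R * F k = F k0.
Proof.
rewrite (bigD1 k0) //= eqxx mul1r big1 ?addr0 // => k /negPf ->.
by rewrite mul0r.
Qed.

Lemma sum_delta' p (k0 : 'I_p) (F : 'I_p -> C) :
  \sum_k (k0 == k)%:R * F k = F k0.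
Proof. by rewrite -(sum_delta k0); apply: eq_bigr => k _; rewrite eq_sym. Qed.

Definition xiZ n m a b (Z : 'M[C]_((n * a) * (m * b), n * m)) (i0 : 'I_n) (j0 : 'I_m)
  : 'cV[C]_(a * b) :=
  \col_l Z (mxtens_index (mxtens_index (i0, (@mxtens_unindex a b l).1),
                          mxtens_index (j0, (@mxtens_unindex a b l).2)))
           (mxtens_index (i0, j0)).

Section Zsec.
Variables (n m a b : nat) (Z : 'M[C]_((n * a) * (m * b), n * m)) (i0 : 'I_n) (j0 : 'I_m).
Hypothesis HZ : forall (X : 'M[C]_n) (Y : 'M[C]_m),
  Z *m (X *t Y) = ((X *t (1%:M : 'M_a)) *t (Y *t (1%:M : 'M_b))) *m Z.

Lemma Zent (k : 'I_n) (r : 'I_a) (l : 'I_m) (r' : 'I_b) (k' : 'I_n) (l' : 'I_m) :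
  Z (mxtens_index (mxtens_index (k, r), mxtens_index (l, r'))) (mxtens_index (k', l'))
  = ((k == k') && (l == l'))%:R * xiZ Z i0 j0 (mxtens_index (r, r')) 0.
Proof.
have := HZ (delta_mx i0 k) (delta_mx j0 l).
move=> /matrixP /(_ (mxtens_index (mxtens_index (i0, r), mxtens_index (j0, r')))
                    (mxtens_index (k', l'))).
rewrite !mxE sum_tens => H.
rewrite sum_tens4 in H.
set R0 := mxtens_index (mxtens_index (i0, r), mxtens_index (j0, r')) in H.
have E1 : \sum_(a0 < n) \sum_(b0 < m) Z R0 (mxtens_index (a0, b0)) *
     (delta_mx i0 k *t delta_mx j0 l) (mxtens_index (a0, b0)) (mxtens_index (k', l'))
   = ((k' == k) && (l' == l))%:R * Z R0 (mxtens_index (i0, j0)).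
  transitivity (\sum_(a0 < n) \sum_(b0 < m) Z R0 (mxtens_index (a0, b0)) *
     (((a0 == i0) && (k' == k))%:R * ((b0 == j0) && (l' == l))%:R)).
    by apply: eq_bigr => a0 _; apply: eq_bigr => b0 _; rewrite tensmxE !mxE.
  rewrite (bigD1 i0) //= [X in _ + X]big1 => [|a0 /negPf na]; last first.
    by apply: big1 => b0 _; rewrite na /= mul0r mulr0.
  rewrite addr0 (bigD1 j0) //= big1 => [|b0 /negPf nb]; last by rewrite nb /= !mulr0.
  by rewrite !eqxx /= addr0 mulrC -natrM mulnb.
have E2 : \sum_(a0 < n) \sum_(b0 < a) \sum_(c < m) \sum_(d < b)
     ((delta_mx i0 k *t 1%:M) *t (delta_mx j0 l *t 1%:M)) R0
        (mxtens_index (mxtens_index (a0, b0), mxtens_index (c, d))) *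
     Z (mxtens_index (mxtens_index (a0, b0), mxtens_index (c, d))) (mxtens_index (k', l'))
   = Z (mxtens_index (mxtens_index (k, r), mxtens_index (l, r'))) (mxtens_index (k', l')).
  transitivity (\sum_(a0 < n) \sum_(b0 < a) \sum_(c < m) \sum_(d < b)
     (((a0 == k)%:R * (r == b0)%:R) * ((c == l)%:R * (r' == d)%:R)) *
     Z (mxtens_index (mxtens_index (a0, b0), mxtens_index (c, d))) (mxtens_index (k', l'))).
    apply: eq_bigr => a0 _; apply: eq_bigr => b0 _; apply: eq_bigr => c _.
    by apply: eq_bigr => d _; rewrite !tensmxE !mxE !eqxx.
  transitivity (\sum_(a0 < n) (a0 == k)%:R * \sum_(b0 < a) (r == b0)%:R *
     \sum_(c < m) (c == l)%:R * \sum_(d < b) (r' == d)%:R *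
     Z (mxtens_index (mxtens_index (a0, b0), mxtens_index (c, d))) (mxtens_index (k', l'))).
    apply: eq_bigr => a0 _; rewrite !mulr_sumr; apply: eq_bigr => b0 _.
    rewrite !mulr_sumr; apply: eq_bigr => c _; rewrite !mulr_sumr; apply: eq_bigr => d _.
    by rewrite !mulrA.
  by rewrite sum_delta sum_delta' sum_delta sum_delta'.
rewrite E1 E2 in H; rewrite -H ?mxE !mxtens_indexK (eq_sym k) (eq_sym l).
by [].
Qed.


Lemma Zform (v : 'cV[C]_(n * m)) : Z *m v = reshuffle (v *t xiZ Z i0 j0).
Proof.
apply/matrixP=> i c; rewrite [c]ord1.
case: (mxtens_indexP i) => A B; case: (mxtens_indexP A) => k r; case: (mxtens_indexP B) => l r'.
rewrite /reshuffle !mxE !mxtens_indexK sum_tens /=.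
transitivity (\sum_(a0 < n) (k == a0)%:R * \sum_(b0 < m) (l == b0)%:R *
    (xiZ Z i0 j0 (mxtens_index (r, r')) 0 * v (mxtens_index (a0, b0)) 0)).
  apply: eq_bigr => a0 _; rewrite mulr_sumr; apply: eq_bigr => b0 _.
  by rewrite Zent -mulnb natrM !mulrA.
rewrite sum_delta' sum_delta' !mxE !mxtens_indexK /= mulrC.
by congr (_ * _); congr (v _ _); apply: val_inj.
Qed.

Lemma xiZ_unit : hadj Z *m Z = 1%:M -> inner (xiZ Z i0 j0) (xiZ Z i0 j0) = 1.
Proof.
have Ze := Zent; move: Ze; set X := xiZ Z i0 j0; clearbody X => Ze.
move=> /matrixP /(_ (mxtens_index (i0, j0)) (mxtens_index (i0, j0))).
rewrite !mxE eqxx sum_tens4 => H; rewrite /inner !mxE sum_tens -[RHS]H.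
transitivity (\sum_(a0 < n) (i0 == a0)%:R * \sum_(b0 < a) \sum_(c < m) (j0 == c)%:R *
  \sum_(d < b) (X (mxtens_index (b0, d)) 0)^* * X (mxtens_index (b0, d)) 0);
  last first.
  apply: eq_bigr => a0 _; rewrite !mulr_sumr; apply: eq_bigr => b0 _.
  rewrite !mulr_sumr; apply: eq_bigr => c _; rewrite !mulr_sumr; apply: eq_bigr => d _.
  rewrite !mxE !Ze (eq_sym a0) (eq_sym c) rmorphM rmorph_nat.
  by case: (i0 == a0); case: (j0 == c); rewrite /= ?(mul0r, mul1r, mulr0).
rewrite sum_delta'; apply: eq_bigr => b0 _.
rewrite sum_delta'; apply: eq_bigr => d _.
by rewrite !mxE.
Qed.

End Zsec.

Lemma tensmx11 p q : (1%:M : 'M[C]_p) *t (1%:M : 'M[C]_q) = 1%:M.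
Proof.
apply/matrixP=> i j; case: (mxtens_indexP i) => a b; case: (mxtens_indexP j) => c d.
rewrite tensmxE !mxE (inj_eq (can_inj (@mxtens_indexK p q))) xpair_eqE.
by case: (a == c); case: (b == d); rewrite /= ?(mul1r, mul0r).
Qed.

Lemma sum_delta_diag p : \sum_(k < p) delta_mx k k = 1%:M :> 'M[C]_p.
Proof.
apply/matrixP=> i j; rewrite summxE !mxE.
under eq_bigr do rewrite mxE.
case: (eqVneq i j) => [<-|nij].
  rewrite (bigD1 i) //= eqxx big1 ?addr0 // => k /negPf nk.
  by rewrite eq_sym nk.
rewrite big1 // => k _; case: (eqVneq i k) => [<-|] //=.
by rewrite eq_sym (negPf nij).
Qed.

Lemma hadj_delta p q (i : 'I_p) (j : 'I_q) : hadj (delta_mx i j : 'M[C]_(p, q)) = delta_mx j i.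
Proof. by apply/matrixP=> a b; rewrite !mxE rmorph_nat andbC. Qed.

Lemma delta_mul p q (i0 : 'I_p) (i : 'I_q) (X : 'M[C]_q) :
  delta_mx i0 i *m X = \sum_k X i k *: delta_mx i0 k.
Proof.
apply/matrixP=> a b; rewrite !mxE summxE.
under eq_bigr do rewrite !mxE.
under [RHS]eq_bigr do rewrite !mxE.
case: (eqVneq a i0) => [_|na]; last first.
  by rewrite !big1 // => k _; rewrite ?(mul0r, mulr0).
rewrite /= (bigD1 i) //= eqxx mul1r big1 ?addr0; last first.
  by move=> k /negPf nk; rewrite nk mul0r.
rewrite (bigD1 b) //= eqxx mulr1 big1 ?addr0 // => k /negPf nk.
by rewrite eq_sym nk mulr0.
Qed.

Lemma reshuffle0 n m a b k :
  reshuffle (0 : 'M[C]_((n * m) * (a * b), k)) = 0.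
Proof. by apply/matrixP=> i j; rewrite !mxE. Qed.

Lemma inner_hadj p q (A B : 'M[C]_(q, p)) (v : 'cV[C]_p) :
  inner ((hadj A *m B) *m v) v = (hadj (A *m v) *m (B *m v)) 0 0.
Proof. by rewrite /inner hadjM !mulmxA. Qed.

End Gen.

Section Main.
Variables (R : realType) (gT : finGroupType).
Local Notation C := R[i].

Section Rep.
Variables (n : nat) (rpi : mx_representation C [set: gT] n).
Hypotheses (upi : unitary_rep rpi) (irrpi : mx_irreducible rpi).

Lemma burn (X : 'M[C]_n) :
  exists c : {ffun gT -> C}, X == \sum_g c g *: rpi g.
Proof.
have := @group_closure_closed_field C gT [set: gT]%G n rpi irrpi.
case/mx_abs_irrP => _ [a_ Ha]; exists [ffun g => a_ g X].
rewrite {1}(Ha X); apply/eqP; rewrite [RHS](eq_bigl (fun g => g \in [set: gT])).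
  by apply: eq_bigr => g _; rewrite ffunE.
by move=> g; rewrite in_setT.
Qed.

Lemma rep1 : rpi 1%g = 1%:M.
Proof. exact: repr_mx1. Qed.

Lemma repM x y : rpi (x * y)%g = rpi x *m rpi y.
Proof. by rewrite repr_mxM ?in_setT. Qed.

Lemma repV x : rpi (x^-1)%g = hadj (rpi x).
Proof.
have [H1 H2] := upi x.
have Hu : rpi x \in unitmx by case/mulmx1_unit: H2.
rewrite repr_mxV ?in_setT //.
by rewrite -[hadj _]mulmx1 -(mulmxV Hu) mulmxA H1 mul1mx.
Qed.
End Rep.


Section Model.
Variables (n m : nat) (rpi : mx_representation C [set: gT] n)
  (rrho : mx_representation C [set: gT] m) (psi : 'cV[C]_(n * m)).
Hypotheses (upi : unitary_rep rpi) (irrpi : mx_irreducible rpi)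
  (urho : unitary_rep rrho) (irrrho : mx_irreducible rrho)
  (upsi : unit_vec psi) (mc : marginally_cyclic psi).
Variables (dA dB : nat) (E : gT -> gT -> gT -> gT -> 'M[C]_dA)
  (F : gT -> gT -> gT -> gT -> 'M[C]_dB) (xi : 'cV[C]_(dA * dB))
  (Ub : gT -> gT -> 'M[C]_dA) (Vb : gT -> gT -> 'M[C]_dB).
Hypotheses (hU : block_unitary Ub) (hV : block_unitary Vb)
  (hE : forall s s' g g', E s s' g g' = hadj (Ub g s) *m Ub g' s')
  (hF : forall s s' g g', F s s' g g' = hadj (Vb g s) *m Vb g' s')
  (fA : red_density_A xi \in unitmx) (fB : red_density_B xi \in unitmx)
  (corr : qns_correlation E F xi =
          schur_channel (fun s t => inner ((rpi s *t rrho t) *m psi) psi)).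

Lemma corrE s s' t t' g g' h h' :
  inner ((E s s' g g' *t F t t' h h') *m xi) xi =
  if [&& g == s, g' == s', h == t & h' == t'] then
    inner ((rpi (s^-1 * s')%g *t rrho (t^-1 * t')%g) *m psi) psi else 0.
Proof. exact: (congr1 (fun f => f s s' t t' g g' h h') corr). Qed.

Lemma inner_sum (I : finType) p (M : I -> 'M[C]_p) (v : 'cV[C]_p) :
  \sum_i inner (M i *m v) v = inner ((\sum_i M i) *m v) v.
Proof. by rewrite /inner mulmx_suml mulmx_sumr summxE. Qed.

Lemma norm0 p q (w : 'cV[C]_(p * q)) (M : 'M[C]_(p * q)) :
  inner ((hadj M *m M) *m w) w = 0 -> M *m w = 0.
Proof.
rewrite inner_hadj => H; apply: hadj_mul_eq0; apply: mx11P; by rewrite H mxE.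
Qed.

Lemma offU g s : g != s -> Ub g s = 0.
Proof.
move=> ngs.
have H : forall h, inner ((E s s g g *t F 1%g 1%g h h) *m xi) xi = 0.
  by move=> h; rewrite corrE (negPf ngs).
have : \sum_(h : gT) inner ((E s s g g *t F 1%g 1%g h h) *m xi) xi = 0.
  by apply: big1 => h _; exact: H.
rewrite inner_sum -tensmx_sumr.
under eq_bigr do rewrite hF.
rewrite hV.1 eqxx scale1r hE.
have -> : hadj (Ub g s) *m Ub g s *t (1%:M : 'M_dB) =
    hadj (Ub g s *t 1%:M) *m (Ub g s *t (1%:M : 'M_dB)).
  by rewrite hadj_tens hadj1 tensmx_mul mul1mx.
move=> /norm0 H0.
by apply: (cancelA fA); rewrite H0 tens0mx mul0mx.
Qed.


Lemma offV h t : h != t -> Vb h t = 0.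
Proof.
move=> nht.
have : \sum_(g : gT) inner ((E 1%g 1%g g g *t F t t h h) *m xi) xi = 0.
  by apply: big1 => g _; rewrite corrE (negPf nht) !andbF.
rewrite inner_sum -tensmx_suml.
under eq_bigr do rewrite hE.
rewrite hU.1 eqxx scale1r hF.
have -> : (1%:M : 'M_dA) *t (hadj (Vb h t) *m Vb h t) =
    hadj (1%:M *t Vb h t) *m ((1%:M : 'M_dA) *t Vb h t).
  by rewrite hadj_tens hadj1 tensmx_mul mul1mx.
move=> /norm0 H0.
by apply: (cancelB fB); rewrite H0 tensmx0 mul0mx.
Qed.

Definition Us s := Ub s s.
Definition Vs t := Vb t t.

Lemma Us_iso s : hadj (Us s) *m Us s = 1%:M.
Proof.
have := hU.1 s s; rewrite eqxx scale1r (bigD1 s) //= big1 ?addr0 // => g ngs.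
by rewrite offU // hadj0 mul0mx.
Qed.
Lemma Us_co s : Us s *m hadj (Us s) = 1%:M.
Proof. exact: mulmx1C (Us_iso s). Qed.
Lemma Vs_iso t : hadj (Vs t) *m Vs t = 1%:M.
Proof.
have := hV.1 t t; rewrite eqxx scale1r (bigD1 t) //= big1 ?addr0 // => g ngs.
by rewrite offV // hadj0 mul0mx.
Qed.
Lemma Vs_co t : Vs t *m hadj (Vs t) = 1%:M.
Proof. exact: mulmx1C (Vs_iso t). Qed.

Lemma Edef s s' g g' :
  E s s' g g' = if (g == s) && (g' == s') then hadj (Us s) *m Us s' else 0.
Proof.
rewrite hE; case: (eqVneq g s) => [->|ngs] /=.
  case: (eqVneq g' s') => [->|n2] //=.
  by rewrite (offU n2) mulmx0.
by rewrite (offU ngs) hadj0 mul0mx.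
Qed.
Lemma Fdef s s' g g' :
  F s s' g g' = if (g == s) && (g' == s') then hadj (Vs s) *m Vs s' else 0.
Proof.
rewrite hF; case: (eqVneq g s) => [->|ngs] /=.
  case: (eqVneq g' s') => [->|n2] //=.
  by rewrite (offV n2) mulmx0.
by rewrite (offV ngs) hadj0 mul0mx.
Qed.

Definition x s t := (Us s *t Vs t) *m xi.
Definition y s t := (rpi s *t rrho t) *m psi.

Lemma gram s s' t t' : hadj (x s t) *m x s' t' = hadj (y s t) *m y s' t'.
Proof.
apply: mx11P.
have := corrE s s' t t' s s' t t'; rewrite !eqxx /= Edef Fdef !eqxx /=.
rewrite !repM (repV upi) (repV urho) => H.
by rewrite /x /y -!inner_hadj !hadj_tens !tensmx_mul.
Qed.

Lemma span_e (v : 'cV[C]_(n * m)) :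
  exists c : {ffun gT -> C}, v = \sum_t c t *: y 1%g t.
Proof.
have [B ->] := mc.2 v; have [c /eqP ->] := burn irrrho B; exists c.
rewrite tensmx_sumr mulmx_suml; apply: eq_bigr => t _.
by rewrite /y rep1 tensmxZr scalemxAl.
Qed.

Lemma span_e' (v : 'cV[C]_(n * m)) :
  exists c : {ffun gT -> C}, v = \sum_s c s *: y s 1%g.
Proof.
have [A ->] := mc.1 v; have [c /eqP ->] := burn irrpi A; exists c.
rewrite tensmx_suml mulmx_suml; apply: eq_bigr => t _.
by rewrite /y rep1 tensmxZl scalemxAl.
Qed.

Lemma ext_span p (M M' : 'M[C]_(p, n * m)) :
  (forall t, M *m y 1%g t = M' *m y 1%g t) -> M = M'.
Proof.
move=> H; apply: colext => v; have [c ->] := span_e v.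
rewrite !mulmx_sumr; apply: eq_bigr => t _; by rewrite -!scalemxAr H.
Qed.

Lemma ext_span' p (M M' : 'M[C]_(p, n * m)) :
  (forall s, M *m y s 1%g = M' *m y s 1%g) -> M = M'.
Proof.
move=> H; apply: colext => v; have [c ->] := span_e' v.
rewrite !mulmx_sumr; apply: eq_bigr => t _; by rewrite -!scalemxAr H.
Qed.

Lemma frame : exists r : gT -> 'rV[C]_(n * m), \sum_t y 1%g t *m r t = 1%:M.
Proof.
have [cf Hcf] := fin_all_exists (fun k : 'I_(n * m) => span_e (delta_mx k 0)).
exists (fun t => \sum_k cf k t *: delta_mx 0 k).
rewrite -sum_delta_diag.
under eq_bigr do rewrite mulmx_sumr.
rewrite exchange_big /=; apply: eq_bigr => k _.
rewrite -(@mul_delta_mx C (n * m) 1 (n * m) 0 k k) Hcf mulmx_suml.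
by apply: eq_bigr => t _; rewrite -scalemxAr scalemxAl.
Qed.

Lemma G_sl k a b u (c : gT -> 'M[C]_(1, k)) :
  hadj (\sum_t x a t *m c t) *m x b u = hadj (\sum_t y a t *m c t) *m y b u.
Proof.
rewrite !hadj_sum !mulmx_suml; apply: eq_bigr => t _.
by rewrite (hadjM (x a t)) (hadjM (y a t)) -!mulmxA gram.
Qed.

Lemma G_ls k a b u (c : gT -> 'M[C]_(1, k)) :
  hadj (x b u) *m (\sum_t x a t *m c t) = hadj (y b u) *m (\sum_t y a t *m c t).
Proof.
by rewrite -[LHS]hadjK hadjM hadjK G_sl hadjM hadjK.
Qed.

Lemma G_ss k k' a b (c : gT -> 'M[C]_(1, k)) (d : gT -> 'M[C]_(1, k')) :
  hadj (\sum_t x a t *m c t) *m (\sum_u x b u *m d u) =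
  hadj (\sum_t y a t *m c t) *m (\sum_u y b u *m d u).
Proof.
rewrite !mulmx_sumr; apply: eq_bigr => u _; by rewrite [LHS]mulmxA [RHS]mulmxA G_sl.
Qed.

Section Frame.
Variable r : gT -> 'rV[C]_(n * m).
Hypothesis hr : \sum_t y 1%g t *m r t = 1%:M.

Definition W := \sum_t x 1%g t *m r t.

Lemma Wy s t : W *m y s t = x s t.
Proof.
apply/eqP; rewrite -subr_eq0; apply/eqP; apply: hadj_mul_eq0.
have WY : W *m y s t = \sum_u x 1%g u *m (r u *m y s t).
  by rewrite /W mulmx_suml; apply: eq_bigr => u _; rewrite !mulmxA.
have YY : \sum_u y 1%g u *m (r u *m y s t) = y s t.
  by rewrite -[RHS]mul1mx -hr mulmx_suml; apply: eq_bigr => u _; rewrite !mulmxA.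
rewrite hadjD hadjN mulmxDl mulmxDr mulmxDr mulNmx mulmxN mulNmx mulmxN opprK WY.
rewrite G_ss G_sl G_ls gram YY.
by rewrite subrr add0r addrC subrr.
Qed.

Lemma W_iso : hadj W *m W = 1%:M.
Proof. by rewrite /W G_ss hr hadj1 mul1mx. Qed.

Lemma Wpsi : W *m psi = (Us 1%g *t Vs 1%g) *m xi.
Proof.
have -> : psi = y 1%g 1%g by rewrite /y !rep1 tensmx11 mul1mx.
by rewrite Wy.
Qed.

Definition A g := Us g *m hadj (Us 1%g).
Definition Bm h := Vs h *m hadj (Vs 1%g).

Lemma Ax g t : (A g *t 1%:M) *m x 1%g t = x g t.
Proof. by rewrite /x mulmxA tensmx_mul mul1mx /A -mulmxA Us_iso mulmx1. Qed.
Lemma Bx h s : (1%:M *t Bm h) *m x s 1%g = x s h.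
Proof. by rewrite /x mulmxA tensmx_mul mul1mx /Bm -mulmxA Vs_iso mulmx1. Qed.
Lemma piy g t : (rpi g *t 1%:M) *m y 1%g t = y g t.
Proof. by rewrite /y mulmxA tensmx_mul rep1 mulmx1 mul1mx. Qed.
Lemma rhoy h s : (1%:M *t rrho h) *m y s 1%g = y s h.
Proof. by rewrite /y mulmxA tensmx_mul rep1 mulmx1 mul1mx. Qed.

Lemma intA g : (A g *t 1%:M) *m W = W *m (rpi g *t 1%:M).
Proof. by apply: ext_span => t; rewrite -!mulmxA piy !Wy Ax. Qed.
Lemma intB h : (1%:M *t Bm h) *m W = W *m (1%:M *t rrho h).
Proof. by apply: ext_span' => s; rewrite -!mulmxA rhoy !Wy Bx. Qed.

Lemma cancelW (M M' : 'M[C]_dA) :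
  (M *t 1%:M) *m W = (M' *t 1%:M) *m W -> M = M'.
Proof.
move=> /(congr1 (fun Q => (1%:M *t hadj (Vs 1%g)) *m (Q *m psi))).
rewrite -!mulmxA Wpsi !mulmxA !tensmx_mul !mulmx1 !mul1mx.
have Ht (Q : 'M[C]_dA) : Q *m Us 1%g *t (hadj (Vs 1%g) *m Vs 1%g) = (Q *m Us 1%g) *t 1%:M.
  by rewrite Vs_iso.
rewrite !Ht => /(cancelA fA) /(congr1 (fun Q => Q *m hadj (Us 1%g))).
by rewrite -!mulmxA Us_co !mulmx1.
Qed.

Lemma cancelWB (N N' : 'M[C]_dB) :
  (1%:M *t N) *m W = (1%:M *t N') *m W -> N = N'.
Proof.
move=> /(congr1 (fun Q => (hadj (Us 1%g) *t 1%:M) *m (Q *m psi))).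
rewrite -!mulmxA Wpsi !mulmxA !tensmx_mul !mulmx1 !mul1mx.
have Ht (Q : 'M[C]_dB) : (hadj (Us 1%g) *m Us 1%g) *t (Q *m Vs 1%g) = 1%:M *t (Q *m Vs 1%g).
  by rewrite Us_iso.
rewrite !Ht => /(cancelB fB) /(congr1 (fun Q => Q *m hadj (Vs 1%g))).
by rewrite -!mulmxA Vs_co !mulmx1.
Qed.

Definition cA (X : 'M[C]_n) : {ffun gT -> C} := xchoose (burn irrpi X).
Lemma hcA X : X = \sum_g cA X g *: rpi g.
Proof. exact/eqP/(xchooseP (burn irrpi X)). Qed.

Definition Phi (X : 'M[C]_n) : 'M[C]_dA := \sum_g cA X g *: A g.

Lemma PhiW X : (Phi X *t 1%:M) *m W = W *m (X *t 1%:M).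
Proof.
rewrite [in RHS](hcA X) /Phi !tensmx_suml mulmx_suml mulmx_sumr.
apply: eq_bigr => g _; by rewrite !tensmxZl -scalemxAl -scalemxAr intA.
Qed.

Lemma PhiU X M : (M *t 1%:M) *m W = W *m (X *t 1%:M) -> Phi X = M.
Proof. by move=> H; apply: cancelW; rewrite PhiW H. Qed.

Lemma PhiM X Y : Phi (X *m Y) = Phi X *m Phi Y.
Proof.
apply: PhiU.
have -> : Phi X *m Phi Y *t 1%:M = (Phi X *t 1%:M) *m (Phi Y *t (1%:M : 'M_dB)).
  by rewrite tensmx_mul mulmx1.
have -> : X *m Y *t 1%:M = (X *t 1%:M) *m (Y *t (1%:M : 'M_m)).
  by rewrite tensmx_mul mulmx1.
by rewrite -mulmxA PhiW mulmxA PhiW -mulmxA.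
Qed.

Lemma Phi1 : Phi 1%:M = 1%:M.
Proof. by apply: PhiU; rewrite !tensmx11 mul1mx mulmx1. Qed.

Lemma Phi_sum (I : finType) (c : I -> C) (X : I -> 'M[C]_n) :
  Phi (\sum_i c i *: X i) = \sum_i c i *: Phi (X i).
Proof.
apply: PhiU; rewrite !tensmx_suml mulmx_suml mulmx_sumr; apply: eq_bigr => i _.
by rewrite !tensmxZl -scalemxAl -scalemxAr PhiW.
Qed.

Lemma Phi_sum1 (I : finType) (X : I -> 'M[C]_n) :
  Phi (\sum_i X i) = \sum_i Phi (X i).
Proof.
have := Phi_sum (fun _ => 1) X; under eq_bigr do rewrite scale1r.
by move=> ->; apply: eq_bigr => i _; rewrite scale1r.
Qed.

Lemma Phi_pi g : Phi (rpi g) = A g.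
Proof. by apply: PhiU; rewrite intA. Qed.

Lemma AA g : hadj (A g) *m A g = 1%:M.
Proof.
by rewrite /A hadjM hadjK mulmxA -(mulmxA (Us 1%g)) Us_iso mulmx1 Us_co.
Qed.

Lemma hadjA g : Phi (hadj (rpi g)) = hadj (A g).
Proof.
apply: PhiU; symmetry.
transitivity ((hadj (A g) *t 1%:M) *m ((A g *t 1%:M) *m W) *m (hadj (rpi g) *t 1%:M)).
  by rewrite !mulmxA tensmx_mul mulmx1 AA tensmx11 mul1mx.
by rewrite intA -!mulmxA tensmx_mul mulmx1 (upi g).2 tensmx11 mulmx1.
Qed.

Lemma PhiA X : Phi (hadj X) = hadj (Phi X).
Proof.
have -> : hadj X = \sum_g (cA X g)^* *: hadj (rpi g).
  by rewrite {1}(hcA X) hadj_sum; apply: eq_bigr => g _; rewrite hadjZ.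
rewrite Phi_sum /Phi hadj_sum; apply: eq_bigr => g _.
by rewrite hadjZ -hadjA.
Qed.

Definition cB (Y : 'M[C]_m) : {ffun gT -> C} := xchoose (burn irrrho Y).
Lemma hcB Y : Y = \sum_g cB Y g *: rrho g.
Proof. exact/eqP/(xchooseP (burn irrrho Y)). Qed.

Definition PhiB (Y : 'M[C]_m) : 'M[C]_dB := \sum_g cB Y g *: Bm g.

Lemma PhiBW Y : (1%:M *t PhiB Y) *m W = W *m (1%:M *t Y).
Proof.
rewrite [in RHS](hcB Y) /PhiB !tensmx_sumr mulmx_suml mulmx_sumr.
apply: eq_bigr => g _; by rewrite !tensmxZr -scalemxAl -scalemxAr intB.
Qed.

Lemma PhiBU Y N : (1%:M *t N) *m W = W *m (1%:M *t Y) -> PhiB Y = N.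
Proof. by move=> H; apply: cancelWB; rewrite PhiBW H. Qed.

Lemma PhiBM X Y : PhiB (X *m Y) = PhiB X *m PhiB Y.
Proof.
apply: PhiBU.
have -> : 1%:M *t (PhiB X *m PhiB Y) = ((1%:M : 'M_dA) *t PhiB X) *m (1%:M *t PhiB Y).
  by rewrite tensmx_mul mulmx1.
have -> : 1%:M *t (X *m Y) = ((1%:M : 'M_n) *t X) *m (1%:M *t Y).
  by rewrite tensmx_mul mulmx1.
by rewrite -mulmxA PhiBW mulmxA PhiBW -mulmxA.
Qed.

Lemma PhiB1 : PhiB 1%:M = 1%:M.
Proof. by apply: PhiBU; rewrite !tensmx11 mul1mx mulmx1. Qed.

Lemma PhiB_sum (I : finType) (c : I -> C) (X : I -> 'M[C]_m) :
  PhiB (\sum_i c i *: X i) = \sum_i c i *: PhiB (X i).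
Proof.
apply: PhiBU; rewrite !tensmx_sumr mulmx_suml mulmx_sumr; apply: eq_bigr => i _.
by rewrite !tensmxZr -scalemxAl -scalemxAr PhiBW.
Qed.

Lemma PhiB_sum1 (I : finType) (X : I -> 'M[C]_m) :
  PhiB (\sum_i X i) = \sum_i PhiB (X i).
Proof.
have := PhiB_sum (fun _ => 1) X; under eq_bigr do rewrite scale1r.
by move=> ->; apply: eq_bigr => i _; rewrite scale1r.
Qed.

Lemma PhiB_rho g : PhiB (rrho g) = Bm g.
Proof. by apply: PhiBU; rewrite intB. Qed.

Lemma BB g : hadj (Bm g) *m Bm g = 1%:M.
Proof.
by rewrite /Bm hadjM hadjK mulmxA -(mulmxA (Vs 1%g)) Vs_iso mulmx1 Vs_co.
Qed.

Lemma hadjB g : PhiB (hadj (rrho g)) = hadj (Bm g).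
Proof.
apply: PhiBU; symmetry.
transitivity ((1%:M *t hadj (Bm g)) *m ((1%:M *t Bm g) *m W) *m (1%:M *t hadj (rrho g))).
  by rewrite !mulmxA tensmx_mul mulmx1 BB tensmx11 mul1mx.
by rewrite intB -!mulmxA tensmx_mul mulmx1 (urho g).2 tensmx11 mulmx1.
Qed.

Lemma PhiBA Y : PhiB (hadj Y) = hadj (PhiB Y).
Proof.
have -> : hadj Y = \sum_g (cB Y g)^* *: hadj (rrho g).
  by rewrite {1}(hcB Y) hadj_sum; apply: eq_bigr => g _; rewrite hadjZ.
rewrite PhiB_sum /PhiB hadj_sum; apply: eq_bigr => g _.
by rewrite hadjZ -hadjB.
Qed.

Variables (i0 : 'I_n) (j0 : 'I_m).

Definition TA0 : 'M[C]_(n * dA, dA) :=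
  \matrix_(k, j) Phi (delta_mx i0 (@mxtens_unindex n dA k).1) (@mxtens_unindex n dA k).2 j.

Lemma TA0_iso : hadj TA0 *m TA0 = 1%:M.
Proof.
apply/matrixP=> j j'; rewrite mxE sum_tens.
transitivity (\sum_i (hadj (Phi (delta_mx i0 i)) *m Phi (delta_mx i0 i)) j j').
  apply: eq_bigr => i _; rewrite mxE; apply: eq_bigr => q0 _.
  by rewrite !mxE mxtens_indexK.
rewrite -summxE.
under eq_bigr do rewrite -PhiA -PhiM hadj_delta mul_delta_mx.
by rewrite -Phi_sum1 sum_delta_diag Phi1.
Qed.

Lemma TA0_int X : TA0 *m Phi X = (X *t 1%:M) *m TA0.
Proof.
apply/matrixP=> K j; case: (mxtens_indexP K) => i q0.
transitivity ((Phi (delta_mx i0 i) *m Phi X) q0 j).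
  by rewrite !mxE; apply: eq_bigr => p _; rewrite !mxE mxtens_indexK.
rewrite -PhiM delta_mul Phi_sum summxE mxE sum_tens.
apply: eq_bigr => k _.
transitivity (X i k * \sum_(r' < dA) (q0 == r')%:R * Phi (delta_mx i0 k) r' j).
  by rewrite sum_delta' mxE.
rewrite mulr_sumr; apply: eq_bigr => r' _.
by rewrite tensmxE !mxE mxtens_indexK /= mulrA.
Qed.

Definition TB0 : 'M[C]_(m * dB, dB) :=
  \matrix_(k, j) PhiB (delta_mx j0 (@mxtens_unindex m dB k).1) (@mxtens_unindex m dB k).2 j.

Lemma TB0_iso : hadj TB0 *m TB0 = 1%:M.
Proof.
apply/matrixP=> j j'; rewrite mxE sum_tens.
transitivity (\sum_i (hadj (PhiB (delta_mx j0 i)) *m PhiB (delta_mx j0 i)) j j').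
  apply: eq_bigr => i _; rewrite mxE; apply: eq_bigr => q0 _.
  by rewrite !mxE mxtens_indexK.
rewrite -summxE.
under eq_bigr do rewrite -PhiBA -PhiBM hadj_delta mul_delta_mx.
by rewrite -PhiB_sum1 sum_delta_diag PhiB1.
Qed.

Lemma TB0_int Y : TB0 *m PhiB Y = (Y *t 1%:M) *m TB0.
Proof.
apply/matrixP=> K j; case: (mxtens_indexP K) => i q0.
transitivity ((PhiB (delta_mx j0 i) *m PhiB Y) q0 j).
  by rewrite !mxE; apply: eq_bigr => p _; rewrite !mxE mxtens_indexK.
rewrite -PhiBM delta_mul PhiB_sum summxE mxE sum_tens.
apply: eq_bigr => k _.
transitivity (Y i k * \sum_(r' < dB) (q0 == r')%:R * PhiB (delta_mx j0 k) r' j).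
  by rewrite sum_delta' mxE.
rewrite mulr_sumr; apply: eq_bigr => r' _.
by rewrite tensmxE !mxE mxtens_indexK /= mulrA.
Qed.

Definition Z := (TA0 *t TB0) *m W.

Lemma ZX X : Z *m (X *t 1%:M) = ((X *t 1%:M) *t (1%:M : 'M_(m * dB))) *m Z.
Proof.
rewrite /Z -mulmxA -PhiW mulmxA tensmx_mul TA0_int mulmx1.
have -> : (X *t 1%:M) *m TA0 *t TB0 = ((X *t 1%:M) *t (1%:M : 'M_(m * dB))) *m (TA0 *t TB0).
  by rewrite tensmx_mul mul1mx.
by rewrite mulmxA.
Qed.

Lemma ZY Y : Z *m (1%:M *t Y) = ((1%:M : 'M_(n * dA)) *t (Y *t 1%:M)) *m Z.
Proof.
rewrite /Z -mulmxA -PhiBW mulmxA tensmx_mul TB0_int mulmx1.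
have -> : TA0 *t ((Y *t 1%:M) *m TB0) = ((1%:M : 'M_(n * dA)) *t (Y *t 1%:M)) *m (TA0 *t TB0).
  by rewrite tensmx_mul mul1mx.
by rewrite mulmxA.
Qed.

Lemma HZ X Y : Z *m (X *t Y) = ((X *t (1%:M : 'M_dA)) *t (Y *t (1%:M : 'M_dB))) *m Z.
Proof.
have -> : X *t Y = (X *t (1%:M : 'M_m)) *m ((1%:M : 'M_n) *t Y).
  by rewrite tensmx_mul mulmx1 mul1mx.
by rewrite mulmxA ZX -mulmxA ZY mulmxA tensmx_mul mulmx1 mul1mx.
Qed.

Lemma Z_iso : hadj Z *m Z = 1%:M.
Proof.
rewrite /Z hadjM hadj_tens mulmxA -(mulmxA (hadj W)) tensmx_mul TA0_iso TB0_iso.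
by rewrite tensmx11 mulmx1 W_iso.
Qed.

Lemma eqA s s' :
  Us 1%g *m (hadj (Us s) *m Us s') = Phi (rpi (s^-1 * s')%g) *m Us 1%g.
Proof.
rewrite repM (repV upi) PhiM hadjA Phi_pi /A hadjM hadjK.
by rewrite -!mulmxA Us_iso mulmx1 !mulmxA.
Qed.

Lemma eqB t t' :
  Vs 1%g *m (hadj (Vs t) *m Vs t') = PhiB (rrho (t^-1 * t')%g) *m Vs 1%g.
Proof.
rewrite repM (repV urho) PhiBM hadjB PhiB_rho /Bm hadjM hadjK.
by rewrite -!mulmxA Vs_iso mulmx1 !mulmxA.
Qed.

Lemma final s s' g g' t t' h h' :
  ((TA0 *m Us 1%g) *t (TB0 *m Vs 1%g)) *m ((E s s' g g' *t F t t' h h') *m xi) =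
  reshuffle ((((if (s == g) && (s' == g') then rpi (s^-1 * s')%g else 0) *t
               (if (t == h) && (t' == h') then rrho (t^-1 * t')%g else 0)) *m psi)
             *t xiZ Z i0 j0).
Proof.
rewrite Edef Fdef (eq_sym g s) (eq_sym g' s') (eq_sym h t) (eq_sym h' t').
case: ifP => _; last by rewrite !tens0mx !mul0mx mulmx0 tens0mx reshuffle0.
case: ifP => _; last by rewrite !tensmx0 !mul0mx mulmx0 tens0mx reshuffle0.
set X := rpi _; set Y := rrho _.
transitivity (((X *t 1%:M) *t (Y *t 1%:M)) *m (TA0 *t TB0) *m (Us 1%g *t Vs 1%g) *m xi).
  rewrite mulmxA !tensmx_mul; congr (_ *m xi); congr (_ *t _).
    by rewrite -[LHS]mulmxA eqA mulmxA TA0_int -mulmxA.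
  by rewrite -[LHS]mulmxA eqB mulmxA TB0_int.
transitivity (((X *t 1%:M) *t (Y *t 1%:M)) *m Z *m psi).
  by rewrite -!mulmxA Wpsi.
by rewrite -HZ -mulmxA (Zform i0 j0 HZ).
Qed.

End Frame.

End Model.
End Main.

Theorem theoremp (R : realType) (gT : finGroupType) (n m : nat)
  (rpi : mx_representation R[i] [set: gT] n)
  (rrho : mx_representation R[i] [set: gT] m)
  (psi : 'cV[R[i]]_(n * m)) :
  unitary_rep rpi -> mx_irreducible rpi ->
  unitary_rep rrho -> mx_irreducible rrho ->
  unit_vec psi -> marginally_cyclic psi ->
  (forall X : 'M[R[i]]_(n * m), exists c : gT -> gT -> R[i],
     X = \sum_(s : gT) \sum_(t : gT)
           c s t *: ((rpi s *t rrho t) *m psi *m hadj psi *m hadj (rpi s *t rrho t))) ->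
  let u := fun s t : gT => inner ((rpi s *t rrho t) *m psi) psi in
  let Et := fun s s' g g' : gT =>
    if (s == g) && (s' == g') then rpi (s^-1 * s')%g else 0 in
  let Ft := fun t t' h h' : gT =>
    if (t == h) && (t' == h') then rrho (t^-1 * t')%g else 0 in
  forall (dA dB : nat)
    (E : gT -> gT -> gT -> gT -> 'M[R[i]]_dA)
    (F : gT -> gT -> gT -> gT -> 'M[R[i]]_dB)
    (xi : 'cV[R[i]]_(dA * dB)),
  unitary_model E F xi -> full_rank xi ->
  qns_correlation E F xi = schur_channel u ->
  exists (a b : nat) (TA : 'M[R[i]]_(n * a, dA)) (TB : 'M[R[i]]_(m * b, dB))
         (xiaux : 'cV[R[i]]_(a * b)),
    [/\ isometry_mx TA, isometry_mx TB, unit_vec xiaux &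
      forall s s' g g' t t' h h' : gT,
        (TA *t TB) *m ((E s s' g g' *t F t t' h h') *m xi)
        = reshuffle (((Et s s' g g' *t Ft t t' h h') *m psi) *t xiaux)].
Proof.
move=> upi irrpi urho irrrho upsi mc _ u Et Ft dA dB E F xi.
move=> [[Ub [hU hE]] [[Vb [hV hF]] _]] [fA fB] corr.
have nm : (0 < n * m)%N.
  rewrite lt0n; apply/eqP => H0; move: upsi; rewrite /unit_vec /inner mxE big1.
    by move/eqP; rewrite eq_sym oner_eq0.
  by move=> k _; have := ltn_ord k; rewrite {2}H0.
pose i0 := (@mxtens_unindex n m (Ordinal nm)).1.
pose j0 := (@mxtens_unindex n m (Ordinal nm)).2.
have [r hr] := frame rpi irrrho mc.
exists dA, dB, (TA0 irrpi Ub i0 *m Us Ub 1%g), (TB0 irrrho Vb j0 *m Vs Vb 1%g).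
exists (xiZ (Z irrpi irrrho xi Ub Vb r i0 j0) i0 j0).
split.
- rewrite /isometry_mx hadjM mulmxA -(mulmxA (hadj (Us Ub 1%g))).
  rewrite (TA0_iso upi irrpi urho irrrho mc hU hV hE hF fA fB corr hr i0).
  by rewrite mulmx1 (Us_iso (rpi:=rpi) (rrho:=rrho) (psi:=psi) hU hV hE hF fA corr).
- rewrite /isometry_mx hadjM mulmxA -(mulmxA (hadj (Vs Vb 1%g))).
  rewrite (TB0_iso upi irrpi urho irrrho mc hU hV hE hF fA fB corr hr j0).
  by rewrite mulmx1 (Vs_iso (rpi:=rpi) (rrho:=rrho) (psi:=psi) hU hV hE hF fB corr).
- exact: (xiZ_unit i0 j0 (HZ upi irrpi urho irrrho mc hU hV hE hF fA fB corr hr i0 j0)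
    (Z_iso upi irrpi urho irrrho mc hU hV hE hF fA fB corr hr i0 j0)).
- move=> s s' g g' t t' h h'.
  exact: (final upi irrpi urho irrrho mc hU hV hE hF fA fB corr hr i0 j0).
Qed.
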